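(* Let $L_0$ be shared between frames $\mathcal{F}_1,\mathcal{F}_2$. Let $\mathcal{B}_{lc}\in\mathrm{lruns}_{\mathrm{LEFT}_0\cup C_{cut,0}}(\mathcal{F}_1)$ and $\mathcal{B}_{rc}\in\mathrm{lruns}_{\mathrm{RIGHT}_2\cup C_{cut,0}}(\mathcal{F}_2)$ satisfy $\mathcal{B}_{lc}|_{C_{cut,0}}=\mathcal{B}_{rc}|_{C_{cut,0}}$. Then there is an $\mathcal{A}\in\mathrm{exec}(\mathcal{F}_2)$ such that $\mathcal{B}_{lc}=\mathcal{A}|_{\mathrm{LEFT}_0\cup C_{cut,0}}$ and $\mathcal{B}_{rc}=\mathcal{A}|_{\mathrm{RIGHT}_2\cup C_{cut,0}}$.
   Context: A frame consists of pairwise disjoint sets of locations $\mathcal{LO}$, channels $\mathcal{CH}$, data $\mathcal{D}$. Each channel $c$ either has both a sender $\mathrm{sender}(c)$ and a recipient $\mathrm{recipient}(c)$ (possibly equal), or neither; $\mathrm{chans}(\ell)$ is the set of channels of which $\ell$ is sender or recipient. Each location $\ell$ has a prefix-closed set $\mathrm{traces}(\ell)$ of finite or infinite sequences of labels $(c,v)$, $c\in\mathrm{chans}(\ell)$, $v\in\mathcal{D}$. Events are drawn from a common set $E$ with functions $\mathrm{chan}$ and $\mathrm{msg}$. A system of events $(B,\preceq)$ has $B\subseteq E$ and $\preceq$ a partial order with finitely many predecessors per event; it is an execution of frame $\mathcal{F}_i$ ($\in\mathrm{exec}(\mathcal{F}_i)$) iff for each location $\ell$ of $\mathcal{F}_i$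 the events whose channel has $\ell$ as sender or recipient are linearly ordered and, as a sequence of labels $(\mathrm{chan}(e),\mathrm{msg}(e))$, lie in $\mathrm{traces}(\ell)$. $\mathcal{B}|_C$ keeps events with channel in $C$ and the restricted order; $\mathrm{lruns}_C(\mathcal{F}_i)=\{\mathcal{A}|_C:\mathcal{A}\in\mathrm{exec}(\mathcal{F}_i)\}$. A set $L_0$ of locations is shared between $\mathcal{F}_1$ and $\mathcal{F}_2$ (with locations $\mathcal{LO}_i$, channels $\mathcal{CH}_i$) iff $L_0\subseteq\mathcal{LO}_1\cap\mathcal{LO}_2$ and each $\ell\in L_0$ has the same channel endpoints and the same trace set in both frames. Then $\mathrm{LEFT}_0=\{c\in\mathcal{CH}_1:$ both endpoints of $c$ are in $L_0\}$, $C_{cut,0}=\{c\in\mathcal{CH}_1:$ exactly one endpoint of $c$ is in $L_0\}$, and $\mathrm{RIGHT}_2=\{c\in\mathcal{CH}_2:$ no endpoint of $c$ is in $L_0\}$. *)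

(* Defs.v *)
From Stdlib Require Import List Arith PeanoNat.
Set Implicit Arguments.

Section Frames.
Variables (LO CH D : Type).

(* A finite or infinite sequence of labels: a function nat -> option label
   that, once undefined, stays undefined (the domain is an initial segment). *)
Definition label := (CH * D)%type.
Definition lseq := nat -> option label.
Definition wf_seq {A : Type} (s : nat -> option A) : Prop :=
  forall n, s n = None -> s (S n) = None.
Definition trunc {A : Type} (n : nat) (s : nat -> option A) : nat -> option A :=
  fun k => if k <? n then s k else None.

Record frame := Frame {
  f_loc : LO -> Prop;
  f_chan : CH -> Prop;
  f_ends : CH -> option (LO * LO);            (* Some (sender, recipient), or neither *)
  f_ends_ok : forall c s r, f_chan c -> f_ends c = Some (s, r) -> f_loc s /\ f_loc r;
  f_traces : LO -> lseq -> Prop;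
  f_traces_wf : forall l s, f_traces l s -> wf_seq s;
  f_traces_prefix : forall l s n, f_traces l s -> f_traces l (trunc n s);
  f_traces_lab : forall l s n c v, f_traces l s -> s n = Some (c, v) ->
      f_chan c /\ exists a b, f_ends c = Some (a, b) /\ (a = l \/ b = l)
}.

Definition chans (F : frame) (l : LO) (c : CH) : Prop :=
  f_chan F c /\ exists a b, f_ends F c = Some (a, b) /\ (a = l \/ b = l).

Definition shared (F1 F2 : frame) (L0 : LO -> Prop) : Prop :=
  forall l, L0 l ->
    f_loc F1 l /\ f_loc F2 l /\
    (forall c, chans F1 l c <-> chans F2 l c) /\
    (forall c, chans F1 l c -> f_ends F1 c = f_ends F2 c) /\
    (forall s, f_traces F1 l s <-> f_traces F2 l s).

Definition LEFT0 (F1 : frame) (L0 : LO -> Prop) (c : CH) : Prop :=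
  f_chan F1 c /\ exists a b, f_ends F1 c = Some (a, b) /\ L0 a /\ L0 b.
Definition Ccut0 (F1 : frame) (L0 : LO -> Prop) (c : CH) : Prop :=
  f_chan F1 c /\ exists a b, f_ends F1 c = Some (a, b) /\
     ((L0 a /\ ~ L0 b) \/ (~ L0 a /\ L0 b)).
Definition RIGHT2 (F2 : frame) (L0 : LO -> Prop) (c : CH) : Prop :=
  f_chan F2 c /\ forall a b, f_ends F2 c = Some (a, b) -> ~ L0 a /\ ~ L0 b.

Definition setU {A : Type} (P Q : A -> Prop) : A -> Prop := fun x => P x \/ Q x.

Variables (E : Type) (chan : E -> CH) (msg : E -> D).

Record sys := Sys { s_ev : E -> Prop; s_le : E -> E -> Prop }.

Definition is_sys (B : sys) : Prop :=
  (forall x y, s_le B x y -> s_ev B x /\ s_ev B y) /\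
  (forall x, s_ev B x -> s_le B x x) /\
  (forall x y, s_le B x y -> s_le B y x -> x = y) /\
  (forall x y z, s_le B x y -> s_le B y z -> s_le B x z) /\
  (forall e, s_ev B e -> exists l : list E, forall x, s_le B x e -> In x l).

Definition sys_eq (B1 B2 : sys) : Prop :=
  (forall e, s_ev B1 e <-> s_ev B2 e) /\
  (forall x y, s_le B1 x y <-> s_le B2 x y).

Definition enumerates (S : E -> Prop) (le : E -> E -> Prop) (s : nat -> option E) : Prop :=
  wf_seq s /\
  (forall n e, s n = Some e -> S e) /\
  (forall e, S e -> exists n, s n = Some e) /\
  (forall m n e f, s m = Some e -> s n = Some f -> (le e f <-> m <= n)).

Definition labels (s : nat -> option E) : lseq :=
  fun n => option_map (fun e => (chan e, msg e)) (s n).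

Definition is_exec (F : frame) (B : sys) : Prop :=
  is_sys B /\
  forall l, f_loc F l ->
    exists s, enumerates (fun e => s_ev B e /\ chans F l (chan e)) (s_le B) s /\
              f_traces F l (labels s).

Definition restrict (B : sys) (C : CH -> Prop) : sys :=
  Sys (fun e => s_ev B e /\ C (chan e))
      (fun x y => s_le B x y /\ C (chan x) /\ C (chan y)).

Definition in_lruns (C : CH -> Prop) (F : frame) (B : sys) : Prop :=
  exists A, is_exec F A /\ sys_eq B (restrict A C).

End Frames.

(* Main.v *)
Require Import Defs.
From Stdlib Require Import List Classical.

Section Glue.
Variable E : Type.
Variables (P1 P2 C1 C2 Cut : E -> Prop) (R1 R2 : E -> E -> Prop).
Hypothesis R1_ev : forall x y, R1 x y -> P1 x /\ P1 y.
Hypothesis R2_ev : forall x y, R2 x y -> P2 x /\ P2 y.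
Hypothesis R1_refl : forall x, P1 x -> R1 x x.
Hypothesis R2_refl : forall x, P2 x -> R2 x x.
Hypothesis R1_anti : forall x y, R1 x y -> R1 y x -> x = y.
Hypothesis R2_anti : forall x y, R2 x y -> R2 y x -> x = y.
Hypothesis R1_trans : forall x y z, R1 x y -> R1 y z -> R1 x z.
Hypothesis R2_trans : forall x y z, R2 x y -> R2 y z -> R2 x z.
Hypothesis R1_fin : forall e, P1 e -> exists l : list E, forall x, R1 x e -> In x l.
Hypothesis R2_fin : forall e, P2 e -> exists l : list E, forall x, R2 x e -> In x l.
Hypothesis P1C : forall x, P1 x -> C1 x.
Hypothesis P2C : forall x, P2 x -> C2 x.
Hypothesis CutC : forall x, C1 x -> C2 x -> Cut x.
Hypothesis CutP : forall x, Cut x -> (P1 x <-> P2 x).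
Hypothesis CutR : forall x y, Cut x -> Cut y -> (R1 x y <-> R2 x y).

Definition Pu x := P1 x \/ P2 x.
Definition Ru x y := R1 x y \/ R2 x y \/ (exists c, R1 x c /\ R2 c y) \/ (exists c, R2 x c /\ R1 c y).

Lemma both_cut x : P1 x -> P2 x -> Cut x.
Proof. auto. Qed.

Lemma c12 x y : R1 x y -> Cut x -> Cut y -> R2 x y.
Proof. intros; apply CutR; auto. Qed.
Lemma c21 x y : R2 x y -> Cut x -> Cut y -> R1 x y.
Proof. intros; apply CutR; auto. Qed.

Lemma mix1 a b c d : R1 a b -> R2 b c -> R1 c d -> R1 a d.
Proof.
  intros H1 H2 H3.
  pose proof (R1_ev _ _ H1); pose proof (R2_ev _ _ H2); pose proof (R1_ev _ _ H3).
  assert (Cut b) by (apply both_cut; tauto).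
  assert (Cut c) by (apply both_cut; tauto).
  eauto using c21.
Qed.
Lemma mix2 a b c d : R2 a b -> R1 b c -> R2 c d -> R2 a d.
Proof.
  intros H1 H2 H3.
  pose proof (R2_ev _ _ H1); pose proof (R1_ev _ _ H2); pose proof (R2_ev _ _ H3).
  assert (Cut b) by (apply both_cut; tauto).
  assert (Cut c) by (apply both_cut; tauto).
  eauto using c12.
Qed.

Lemma Ru_ev x y : Ru x y -> Pu x /\ Pu y.
Proof.
  unfold Ru, Pu; intros [H|[H|[[c [H H']]|[c [H H']]]]];
  repeat match goal with H : R1 _ _ |- _ => apply R1_ev in H | H : R2 _ _ |- _ => apply R2_ev in H end;
  tauto.
Qed.

Lemma Ru_refl x : Pu x -> Ru x x.
Proof. unfold Ru, Pu; intros [H|H]; auto. Qed.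

Lemma Ru_trans x y z : Ru x y -> Ru y z -> Ru x z.
Proof.
  unfold Ru; intros [H|[H|[[c [H H']]|[c [H H']]]]] [K|[K|[[d [K K']]|[d [K K']]]]].
  - left; eauto.
  - right; right; left; eauto.
  - right; right; left; exists d; split; eauto.
  - left; eauto using mix1.
  - right; right; right; eauto.
  - right; left; eauto.
  - right; left; eauto using mix2.
  - right; right; right; exists d; split; eauto.
  - left; eauto using mix1.
  - right; right; left; exists c; split; eauto.
  - right; right; left; exists d; split; eauto using mix1.
  - left; eauto using mix1.
  - right; right; right; exists c; split; eauto.
  - right; left; eauto using mix2.
  - right; left; eauto using mix2.
  - right; right; right; exists d; split; eauto using mix2.
Qed.

Lemma norm1 x y : Ru x y -> P1 x -> P1 y -> R1 x y.
Proof.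
  unfold Ru; intros [H|[H|[[c [H H']]|[c [H H']]]]] Hx Hy; auto.
  - pose proof (R2_ev _ _ H). apply c21; auto; apply both_cut; tauto.
  - pose proof (R1_ev _ _ H); pose proof (R2_ev _ _ H').
    apply R1_trans with c; auto. apply c21; auto; apply both_cut; tauto.
  - pose proof (R2_ev _ _ H); pose proof (R1_ev _ _ H').
    apply R1_trans with c; auto. apply c21; auto; apply both_cut; tauto.
Qed.
Lemma norm2 x y : Ru x y -> P2 x -> P2 y -> R2 x y.
Proof.
  unfold Ru; intros [H|[H|[[c [H H']]|[c [H H']]]]] Hx Hy; auto.
  - pose proof (R1_ev _ _ H). apply c12; auto; apply both_cut; tauto.
  - pose proof (R1_ev _ _ H); pose proof (R2_ev _ _ H').
    apply R2_trans with c; auto. apply c12; auto; apply both_cut; tauto.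
  - pose proof (R2_ev _ _ H); pose proof (R1_ev _ _ H').
    apply R2_trans with c; auto. apply c12; auto; apply both_cut; tauto.
Qed.

Lemma anti_aux x y : Ru x y -> Ru y x -> P1 x -> P2 y -> x = y.
Proof.
  intros H K Hx Hy.
  destruct (classic (P2 x)) as [Hx2|Hx2].
  { apply R2_anti; apply norm2; auto. }
  destruct (classic (P1 y)) as [Hy1|Hy1].
  { apply R1_anti; apply norm1; auto. }
  unfold Ru in H, K.
  destruct H as [H|[H|[[c [H H']]|[c [H H']]]]];
  try (apply R1_ev in H; tauto); try (apply R2_ev in H; tauto).
  destruct K as [K|[K|[[d [K K']]|[d [K K']]]]];
  try (apply R1_ev in K; tauto); try (apply R2_ev in K; tauto).
  assert (Hcd : R1 c d) by (apply (mix1 c c d d); eauto;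
     apply R1_refl; [apply (R1_ev _ _ H) | apply (R1_ev _ _ K')]).
  assert (c = d) by (apply R1_anti; eauto).
  subst d. assert (y = c) by (apply R2_anti; auto). subst. exfalso; apply Hy1. apply (R1_ev _ _ H).
Qed.

Lemma Ru_anti x y : Ru x y -> Ru y x -> x = y.
Proof.
  intros H K. destruct (Ru_ev _ _ H) as [[Hx|Hx] [Hy|Hy]].
  - apply R1_anti; apply norm1; auto.
  - apply anti_aux; auto.
  - symmetry; apply anti_aux; auto.
  - apply R2_anti; apply norm2; auto.
Qed.

Lemma fin1' e : exists l : list E, forall x, R1 x e -> In x l.
Proof.
  destruct (classic (P1 e)) as [H|H]; auto.
  exists nil; intros x Hx; apply R1_ev in Hx; tauto.
Qed.
Lemma fin2' e : exists l : list E, forall x, R2 x e -> In x l.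
Proof.
  destruct (classic (P2 e)) as [H|H]; auto.
  exists nil; intros x Hx; apply R2_ev in Hx; tauto.
Qed.
Lemma finL1 (l : list E) : exists L, forall c, In c l -> forall x, R1 x c -> In x L.
Proof.
  induction l as [|a l [L IH]].
  - exists nil; intros c [].
  - destruct (fin1' a) as [la Ha]. exists (la ++ L).
    intros c [<-|Hc] x Hx; apply in_or_app; eauto.
Qed.
Lemma finL2 (l : list E) : exists L, forall c, In c l -> forall x, R2 x c -> In x L.
Proof.
  induction l as [|a l [L IH]].
  - exists nil; intros c [].
  - destruct (fin2' a) as [la Ha]. exists (la ++ L).
    intros c [<-|Hc] x Hx; apply in_or_app; eauto.
Qed.

Lemma Ru_fin e : exists l : list E, forall x, Ru x e -> In x l.
Proof.
  destruct (fin1' e) as [l1 H1]. destruct (fin2' e) as [l2 H2].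
  destruct (finL1 l2) as [L1 K1]. destruct (finL2 l1) as [L2 K2].
  exists (l1 ++ l2 ++ L1 ++ L2).
  unfold Ru; intros x [H|[H|[[c [H H']]|[c [H H']]]]];
  repeat (apply in_or_app; first [left; solve [eauto] | right]); eauto.
Qed.

Lemma Ru_sys : is_sys (Sys Pu Ru).
Proof.
  unfold is_sys; simpl; split; [|split;[|split;[|split]]].
  - intros x y H; apply (Ru_ev _ _ H).
  - apply Ru_refl.
  - apply Ru_anti.
  - apply Ru_trans.
  - intros e _; apply Ru_fin.
Qed.

Lemma P2to1 S z : (forall e, S e -> C1 e) -> S z -> P2 z -> P1 z.
Proof. intros HS Hs H. exact (proj2 (CutP _ (CutC _ (HS z Hs) (P2C _ H))) H). Qed.
Lemma P1to2 S z : (forall e, S e -> C2 e) -> S z -> P1 z -> P2 z.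
Proof. intros HS Hs H. exact (proj1 (CutP _ (CutC _ (P1C _ H) (HS z Hs))) H). Qed.

Lemma restr1 S : (forall e, S e -> C1 e) ->
  (forall e, Pu e /\ S e <-> P1 e /\ S e) /\
  (forall x y, Pu x /\ S x -> Pu y /\ S y -> (Ru x y <-> R1 x y)).
Proof.
  intros HS; split.
  - intros e; unfold Pu; split; [intros [[H|H] Hs] | intros [H Hs]]; split; eauto using P2to1.
  - intros x y [Hx Hsx] [Hy Hsy]; split; intros H; try (unfold Ru; tauto);
    apply norm1; auto; destruct Hx; destruct Hy; eauto using P2to1.
Qed.
Lemma restr2 S : (forall e, S e -> C2 e) ->
  (forall e, Pu e /\ S e <-> P2 e /\ S e) /\
  (forall x y, Pu x /\ S x -> Pu y /\ S y -> (Ru x y <-> R2 x y)).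
Proof.
  intros HS; split.
  - intros e; unfold Pu; split; [intros [[H|H] Hs] | intros [H Hs]]; split; eauto using P1to2.
  - intros x y [Hx Hsx] [Hy Hsy]; split; intros H; try (unfold Ru; tauto);
    apply norm2; auto; destruct Hx; destruct Hy; eauto using P1to2.
Qed.
End Glue.

Lemma enum_ext (E : Type) (S S' : E -> Prop) (le le' : E -> E -> Prop) s :
  enumerates S le s -> (forall e, S e <-> S' e) ->
  (forall x y, S x -> S y -> (le x y <-> le' x y)) -> enumerates S' le' s.
Proof.
  intros [W [H1 [H2 H3]]] HS Hle. split; [exact W|split;[|split]].
  - intros n e Hn. apply HS; eauto.
  - intros e He. apply H2. apply HS; auto.
  - intros m n e f Hm Hn. rewrite <- Hle by eauto. eauto.
Qed.

Section Ch.
Variables (LO CH D : Type) (F1 F2 : frame LO CH D) (L0 : LO -> Prop).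
Hypothesis Hsh : shared F1 F2 L0.

Lemma left_right c : LEFT0 F1 L0 c -> RIGHT2 F2 L0 c -> False.
Proof.
  intros [Hc [a [b [He [Ha Hb]]]]] [Hc2 HR].
  destruct (Hsh a Ha) as [_ [_ [Hch [Hen _]]]].
  assert (K : chans F1 a c) by (split; eauto 6).
  rewrite (Hen c K) in He. destruct (HR _ _ He); tauto.
Qed.

Lemma left_cut c : LEFT0 F1 L0 c -> Ccut0 F1 L0 c -> False.
Proof.
  intros [Hc [a [b [He [Ha Hb]]]]] [_ [a' [b' [He' H]]]].
  rewrite He in He'. injection He' as <- <-. tauto.
Qed.

Lemma chanL l c : L0 l -> chans F2 l c -> setU (LEFT0 F1 L0) (Ccut0 F1 L0) c.
Proof.
  intros Hl Hc. destruct (Hsh l Hl) as [_ [_ [Hch _]]].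
  apply Hch in Hc. destruct Hc as [Hc [a [b [He Hab]]]].
  destruct Hab as [ -> | -> ].
  - destruct (classic (L0 b)).
    + left; split; eauto 7.
    + right; split; auto; exists l, b; tauto.
  - destruct (classic (L0 a)).
    + left; split; eauto 7.
    + right; split; auto; exists a, l; tauto.
Qed.

Lemma chanR l c : ~ L0 l -> chans F2 l c -> setU (RIGHT2 F2 L0) (Ccut0 F1 L0) c.
Proof.
  intros Hl Hc. destruct Hc as [Hc [a [b [He Hab]]]].
  assert (Hother : forall o, L0 o -> chans F2 o c -> f_ends F1 c = f_ends F2 c /\ f_chan F1 c).
  { intros o Ho Hoc. destruct (Hsh o Ho) as [_ [_ [Hch [Hen _]]]].
    apply Hch in Hoc. split; [apply Hen; auto | apply Hoc]. }
  destruct Hab as [ -> | -> ].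
  - destruct (classic (L0 b)) as [Hb|Hb].
    + right. destruct (Hother b Hb) as [E1 C1]. { split; eauto 7. }
      split; auto. exists l, b. rewrite E1; tauto.
    + left; split; auto. intros a' b' He'. rewrite He in He'. injection He' as <- <-. tauto.
  - destruct (classic (L0 a)) as [Ha|Ha].
    + right. destruct (Hother a Ha) as [E1 C1]. { split; eauto 7. }
      split; auto. exists a, l. rewrite E1; tauto.
    + left; split; auto. intros a' b' He'. rewrite He in He'. injection He' as <- <-. tauto.
Qed.
End Ch.

Theorem lemma11 (LO CH D E : Type) (chan : E -> CH) (msg : E -> D)
  (F1 F2 : frame LO CH D) (L0 : LO -> Prop) :
  shared F1 F2 L0 ->
  forall Blc Brc : sys E,
  in_lruns chan msg (setU (LEFT0 F1 L0) (Ccut0 F1 L0)) F1 Blc ->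
  in_lruns chan msg (setU (RIGHT2 F2 L0) (Ccut0 F1 L0)) F2 Brc ->
  sys_eq (restrict chan Blc (Ccut0 F1 L0)) (restrict chan Brc (Ccut0 F1 L0)) ->
  exists A : sys E, is_exec chan msg F2 A /\
    sys_eq Blc (restrict chan A (setU (LEFT0 F1 L0) (Ccut0 F1 L0))) /\
    sys_eq Brc (restrict chan A (setU (RIGHT2 F2 L0) (Ccut0 F1 L0))).
Proof.
  intros Hsh Blc Brc [A1 [[S1 X1] [Qe1 Ql1]]] [A2 [[S2 X2] [Qe2 Ql2]]] [Hce Hcl].
  set (C1 := setU (LEFT0 F1 L0) (Ccut0 F1 L0)) in *.
  set (C2 := setU (RIGHT2 F2 L0) (Ccut0 F1 L0)) in *.
  set (Cut := Ccut0 F1 L0) in *.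
  set (P1 := fun e => s_ev A1 e /\ C1 (chan e)).
  set (P2 := fun e => s_ev A2 e /\ C2 (chan e)).
  set (R1 := fun x y => s_le A1 x y /\ C1 (chan x) /\ C1 (chan y)).
  set (R2 := fun x y => s_le A2 x y /\ C2 (chan x) /\ C2 (chan y)).
  simpl in *.
  destruct S1 as [a1 [b1 [c1 [d1 e1]]]].
  destruct S2 as [a2 [b2 [c2 [d2 e2]]]].
  assert (R1_ev : forall x y, R1 x y -> P1 x /\ P1 y).
  { unfold R1, P1; intros x y [H [K L]]; destruct (a1 _ _ H); tauto. }
  assert (R2_ev : forall x y, R2 x y -> P2 x /\ P2 y).
  { unfold R2, P2; intros x y [H [K L]]; destruct (a2 _ _ H); tauto. }
  assert (R1_refl : forall x, P1 x -> R1 x x).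
  { unfold R1, P1; intros x [H K]; auto. }
  assert (R2_refl : forall x, P2 x -> R2 x x).
  { unfold R2, P2; intros x [H K]; auto. }
  assert (R1_anti : forall x y, R1 x y -> R1 y x -> x = y).
  { unfold R1; intros x y [H _] [K _]; auto. }
  assert (R2_anti : forall x y, R2 x y -> R2 y x -> x = y).
  { unfold R2; intros x y [H _] [K _]; auto. }
  assert (R1_trans : forall x y z, R1 x y -> R1 y z -> R1 x z).
  { unfold R1; intros x y z [H [? ?]] [K [? ?]]; eauto. }
  assert (R2_trans : forall x y z, R2 x y -> R2 y z -> R2 x z).
  { unfold R2; intros x y z [H [? ?]] [K [? ?]]; eauto. }
  assert (R1_fin : forall e, P1 e -> exists l : list E, forall x, R1 x e -> In x l).
  { unfold R1, P1; intros e [H _]. destruct (e1 e H) as [l Hl]. exists l; intros x [K _]; auto. }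
  assert (R2_fin : forall e, P2 e -> exists l : list E, forall x, R2 x e -> In x l).
  { unfold R2, P2; intros e [H _]. destruct (e2 e H) as [l Hl]. exists l; intros x [K _]; auto. }
  assert (P1C : forall x, P1 x -> C1 (chan x)) by (unfold P1; tauto).
  assert (P2C : forall x, P2 x -> C2 (chan x)) by (unfold P2; tauto).
  assert (CutC : forall x, C1 (chan x) -> C2 (chan x) -> Cut (chan x)).
  { unfold C1, C2, setU; intros x [H|H] [K|K]; auto; exfalso.
    all: eapply left_right; eauto. }
  assert (CutP : forall x, Cut (chan x) -> (P1 x <-> P2 x)).
  { unfold P1, P2; intros x Hx.
    assert (C1 (chan x)) by (right; exact Hx). assert (C2 (chan x)) by (right; exact Hx).
    specialize (Hce x); specialize (Qe1 x); specialize (Qe2 x). tauto. }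
  assert (CutR : forall x y, Cut (chan x) -> Cut (chan y) -> (R1 x y <-> R2 x y)).
  { unfold R1, R2; intros x y Hx Hy.
    assert (C1 (chan x)) by (right; exact Hx). assert (C2 (chan x)) by (right; exact Hx).
    assert (C1 (chan y)) by (right; exact Hy). assert (C2 (chan y)) by (right; exact Hy).
    specialize (Hcl x y); specialize (Ql1 x y); specialize (Ql2 x y). tauto. }
  pose (CC1 := fun e => C1 (chan e)). pose (CC2 := fun e => C2 (chan e)).
  pose (CCut := fun e => Cut (chan e)).
  pose proof (@Ru_sys E P1 P2 CC1 CC2 CCut R1 R2 R1_ev R2_ev R1_refl R2_refl R1_anti R2_anti
    R1_trans R2_trans R1_fin R2_fin P1C P2C CutC CutR) as Hsys.
  pose proof (@restr1 E P1 P2 CC1 CC2 CCut R1 R2 R1_ev R2_ev R1_trans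
    P1C P2C CutC CutP CutR) as Hr1.
  pose proof (@restr2 E P1 P2 CC1 CC2 CCut R1 R2 R1_ev R2_ev R2_trans
    P1C P2C CutC CutP CutR) as Hr2.
  pose proof (@Ru_ev E P1 P2 R1 R2 R1_ev R2_ev) as Hev.
  pose proof (@chanL LO CH D F1 F2 L0 Hsh) as chL.
  pose proof (@chanR LO CH D F1 F2 L0 Hsh) as chR.
  exists (Sys (Pu E P1 P2) (Ru E R1 R2)).
  split; [split; [exact Hsys|] | split].
  - simpl. intros l Hl.
    destruct (classic (L0 l)) as [H0|H0].
    + destruct (Hsh l H0) as [Hl1 [_ [Hch [_ Htr]]]].
      destruct (X1 l Hl1) as [s [Hs Ht]]. exists s. split; [|apply Htr; exact Ht].
      destruct (Hr1 (fun e => chans F2 l (chan e))) as [Ha Hb].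
      { intros e He. exact (chL _ _ H0 He). }
      eapply enum_ext; [exact Hs| |].
      * intros e. rewrite Ha. unfold P1. rewrite Hch.
        split; [intros [K1 K2]; split; [split; [exact K1 | exact (chL _ _ H0 K2)] | exact K2] | tauto].
      * intros x y [Hx Hcx] [Hy Hcy]. apply Hch in Hcx; apply Hch in Hcy.
        assert (Px : P1 x) by (split; [exact Hx | exact (chL _ _ H0 Hcx)]).
        assert (Py : P1 y) by (split; [exact Hy | exact (chL _ _ H0 Hcy)]).
        rewrite (Hb x y (conj (or_introl Px) Hcx) (conj (or_introl Py) Hcy)).
        unfold R1, P1 in *. tauto.
    + destruct (X2 l Hl) as [s [Hs Ht]]. exists s. split; [|exact Ht].
      destruct (Hr2 (fun e => chans F2 l (chan e))) as [Ha Hb].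
      { intros e He. exact (chR _ _ H0 He). }
      eapply enum_ext; [exact Hs| |].
      * intros e. rewrite Ha. unfold P2.
        split; [intros [K1 K2]; split; [split; [exact K1 | exact (chR _ _ H0 K2)] | exact K2] | tauto].
      * intros x y [Hx Hcx] [Hy Hcy].
        assert (Px : P2 x) by (split; [exact Hx | exact (chR _ _ H0 Hcx)]).
        assert (Py : P2 y) by (split; [exact Hy | exact (chR _ _ H0 Hcy)]).
        rewrite (Hb x y (conj (or_intror Px) Hcx) (conj (or_intror Py) Hcy)).
        unfold R2, P2 in *. tauto.
  - destruct (Hr1 CC1 (fun e H => H)) as [Ha Hb]. split; simpl.
    + intros e. rewrite Qe1. pose proof (Ha e) as Hae. unfold CC1, P1 in *. tauto.
    + intros x y. rewrite Ql1. split.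
      * intros H. assert (HR : R1 x y) by exact H. destruct (R1_ev x y HR) as [Px Py].
        split; [|unfold P1 in *; tauto]. refine (proj2 (Hb x y _ _) HR); (split; [left; assumption | unfold P1, CC1 in *; tauto]).
      * intros [H [Hx Hy]]. destruct (Hev x y H) as [Px Py].
        exact (proj1 (Hb x y (conj Px Hx) (conj Py Hy)) H).
  - destruct (Hr2 CC2 (fun e H => H)) as [Ha Hb]. split; simpl.
    + intros e. rewrite Qe2. pose proof (Ha e) as Hae. unfold CC2, P2 in *. tauto.
    + intros x y. rewrite Ql2. split.
      * intros H. assert (HR : R2 x y) by exact H. destruct (R2_ev x y HR) as [Px Py].
        split; [|unfold P2 in *; tauto]. refine (proj2 (Hb x y _ _) HR); (split; [right; assumption | unfold P2, CC2 in *; tauto]).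
      * intros [H [Hx Hy]]. destruct (Hev x y H) as [Px Py].
        exact (proj1 (Hb x y (conj Px Hx) (conj Py Hy)) H).
Qed.
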